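(* Let $G$ be a DCG containing a cycle $C=(v_1,\dots,v_k)$ of distinct vertices, $k\ge 2$ (edges $v_i\to v_{i+1}$, indices mod $k$). Let $H=\textsc{Reverse}(G,C)$. Then $H$ is Markov equivalent to $G$.
   Context: A DCG is a directed graph without self-loops (cycles and 2-cycles allowed). $\mathrm{Pa}_G(v)$ is the set of $u$ with $u\to v$ in $G$. $\textsc{Reverse}(G,C)$ is the DCG on the same vertex set with edge set $$\{v_{i+1}\to v_i : 1\le i\le k\}\ \cup\ \{a\to b\in E(G): b\notin C\}\ \cup\ \{w\to v_{i-1} : 1\le i\le k,\ w\in \mathrm{Pa}_G(v_i)\setminus\{v_{i-1}\}\},$$ i.e. the cycle is reversed, and each other incoming edge $w\to v_i$ of a cycle vertex is replaced by $w\to v_{i-1}$ (indices mod $k$); edges into vertices outside $C$ are kept. d-separation: a path between $a\neq b$ is a sequence of vertices (repeats allowed) with a specified directed edge (either direction) between consecutive vertices; an internal vertex is a collider if both adjacent path-edges point into it; $x$ is a descendant of $v$ if $x=v$ or there is a directed path from $v$ to $x$; the path is active given $Z\subseteq V\setminus\{a,b\}$ if every internal non-collider is outside $Z$ and every collider is in $Z$ or has a descendant in $Z$; $a,b$ are d-separated given $Z$ if no active path exists. Two graphs on the same vertex set are Markov equivalent if they have the same d-separation statements. *)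

(* Defs.v *)
From mathcomp Require Import all_boot.
Set Implicit Arguments. Unset Strict Implicit. Unset Printing Implicit Defensive.

Definition dcg (T : finType) (E : rel T) : Prop := irreflexive E.

Section DSep.
Variables (T : finType) (E : rel T).

(* A path is a start vertex together with a list of steps (d, y):
   d = true  : the path edge is  x -> y  (x the previous vertex)
   d = false : the path edge is  y -> x. *)
Definition step_ok (x : T) (s : bool * T) : bool :=
  if s.1 then E x s.2 else E s.2 x.

Fixpoint walk (x : T) (p : seq (bool * T)) : bool :=
  match p with
  | [::] => true
  | s :: p' => step_ok x s && walk s.2 p'
  end.

Definition descendant (v x : T) : bool := connect E v x.

(* Condition at each internal vertex: the vertex s1.2 is entered by the
   edge of step s1 and left by the edge of step s2; it is a collider iff
   both edges point into it, i.e. s1.1 = true and s2.1 = false. *)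
Fixpoint internal_ok (Z : {set T}) (p : seq (bool * T)) : bool :=
  match p with
  | s1 :: ((s2 :: _) as p') =>
      (if s1.1 && ~~ s2.1
       then [exists z in Z, descendant s1.2 z]
       else s1.2 \notin Z) && internal_ok Z p'
  | _ => true
  end.

Definition active_path (Z : {set T}) (a b : T) (p : seq (bool * T)) : Prop :=
  [/\ walk a p, last a (map snd p) = b & internal_ok Z p].

Definition dsep (a b : T) (Z : {set T}) : Prop :=
  ~ exists p, active_path Z a b p.

End DSep.

Definition markov_equiv (T : finType) (E1 E2 : rel T) : Prop :=
  forall (a b : T) (Z : {set T}), a != b -> a \notin Z -> b \notin Z ->
    (dsep E1 a b Z <-> dsep E2 a b Z).

Definition reverse (T : finType) (E : rel T) (k : nat) (v : 'I_k -> T) : rel T :=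
  fun a b =>
    [|| [exists i : 'I_k, (a == v (ordS i)) && (b == v i)],
        E a b && (b \notin [seq v i | i : 'I_k])
      | [exists i : 'I_k, [&& E a (v i), a != v (ord_pred i) & b == v (ord_pred i)]]].

(* Main.v *)
Require Import Defs.
From mathcomp Require Import all_boot.
Set Implicit Arguments. Unset Strict Implicit. Unset Printing Implicit Defensive.


Section Gen.
Variable T : finType.

Definition okR (R : rel T) (Z : {set T}) (x : T) (f g : bool) : bool :=
  if f && ~~ g then [exists z in Z, descendant R x z] else x \notin Z.

Lemma walk_rcons (R : rel T) x q s :
  walk R x (rcons q s) = walk R x q && step_ok R (last x (map snd q)) s.
Proof. elim: q x => [|u q IH] x /=; first by rewrite andbT. by rewrite IH andbA. Qed.

Lemma internal_ok_cc (R : rel T) Z u w r :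
  internal_ok R Z (u :: w :: r) = okR R Z u.2 u.1 w.1 && internal_ok R Z (w :: r).
Proof. by []. Qed.

Lemma internal_ok_rcons (R : rel T) Z p s t :
  internal_ok R Z (rcons (rcons p s) t) = internal_ok R Z (rcons p s) && okR R Z s.2 s.1 t.1.
Proof.
elim: p => [|u p IH]; first by rewrite /= /okR andbT.
have [w [q Ew]] : exists w q, rcons p s = w :: q.
  by case: p {IH} => [|x p] /=; [exists s, [::] | exists x, (rcons p s)].
rewrite rcons_cons Ew in IH *. rewrite !rcons_cons in IH *.
by rewrite !internal_ok_cc IH andbA.
Qed.

Lemma active_mono (R1 R2 : rel T) Z a b p :
  (forall x y, R1 x y -> R2 x y) -> active_path R1 Z a b p -> active_path R2 Z a b p.
Proof.
move=> sub [w l i]; split => //.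
  elim: p a w {l i} => [|[g y] p IH] x //= /andP [st w]; rewrite IH // andbT.
  by case: g st => /=; apply: sub.
have dsub x y : descendant R1 x y -> descendant R2 x y.
  apply: connect_sub => u v /sub; exact: connect1.
elim: p i {w l} => [|s p IH] //=.
case: p IH => [|t p] IH // /andP [c i]; rewrite IH // andbT.
case: ifP c => _ //; case/exists_inP => z Zz d; apply/exists_inP; exists z => //; exact: dsub.
Qed.
End Gen.


Section Main.
Variables (T : finType) (E : rel T) (C : pred T) (nx pv : T -> T).
Hypothesis nxC : forall x, C x -> C (nx x).
Hypothesis pvC : forall x, C x -> C (pv x).
Hypothesis nxK : forall x, C x -> pv (nx x) = x.
Hypothesis pvK : forall x, C x -> nx (pv x) = x.
Hypothesis Ecyc : forall x, C x -> E x (nx x).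
Hypothesis cyc : forall x y, C x -> C y -> exists n, y = iter n pv x.

Definition Hr : rel T := fun a b =>
  [|| C b && (a == nx b), E a b && ~~ C b | [&& C b, E a (nx b) & a != b]].

Lemma Hr_pv x : C x -> Hr x (pv x).
Proof. by move=> Cx; rewrite /Hr pvC //= pvK // eqxx. Qed.

Lemma Hr_nx x : C x -> Hr (nx x) x.
Proof. by move=> Cx; rewrite /Hr Cx eqxx. Qed.

Lemma Hr_keep x y : E x y -> ~~ C y -> Hr x y.
Proof. by move=> Exy Cy; rewrite /Hr Exy Cy orbT. Qed.

Lemma Hr_shift x y : C y -> E x y -> x != pv y -> Hr x (pv y).
Proof. by move=> Cy Exy ne; rewrite /Hr pvC // pvK // Exy ne !orbT. Qed.

Lemma iter_pvC n x : C x -> C (iter n pv x).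
Proof. by move=> Cx; elim: n => //= n IH; apply: pvC. Qed.

Lemma iter_nxC n x : C x -> C (iter n nx x).
Proof. by move=> Cx; elim: n => //= n IH; apply: nxC. Qed.

Lemma Hconn x y : C x -> C y -> connect Hr x y.
Proof.
move=> Cx Cy; have [n ->] := cyc Cx Cy.
elim: n => [|n IH] /=; first exact: connect0.
apply: connect_trans IH (connect1 _); apply: Hr_pv; exact: iter_pvC.
Qed.

Lemma iter_nx_pv m d : C d -> iter m nx (iter m pv d) = d.
Proof.
move=> Cd; elim: m => // m IH.
by rewrite [iter m.+1 nx _]iterSr iterS pvK ?IH // iter_pvC.
Qed.

Lemma cycN x y : C x -> C y -> exists n, y = iter n nx x.
Proof.
move=> Cx Cy; have [m ->] := cyc Cy Cx; exists m; by rewrite iter_nx_pv.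
Qed.

Lemma desc_GH (Z : {set T}) x :
  [exists z in Z, descendant E x z] -> [exists z in Z, descendant Hr x z].
Proof.
case/exists_inP=> z Zz /connectP [p pth Ez]; subst z.
elim: p x pth Zz => [|y p IH] x /=.
  by move=> _ Zx; apply/exists_inP; exists x => //; exact: connect0.
case/andP => Exy pth Zl; case/exists_inP: (IH y pth Zl) => z Zz Hyz.
apply/exists_inP; exists z => //; rewrite /descendant.
case Cy: (C y).
  have Hpy : connect Hr (pv y) z := connect_trans (Hconn (pvC Cy) Cy) Hyz.
  case: (eqVneq x (pv y)) => [->//|ne].
  exact: connect_trans (connect1 (Hr_shift Cy Exy ne)) Hpy.
exact: connect_trans (connect1 (Hr_keep Exy (negbT Cy))) Hyz.
Qed.

Lemma okR_GH Z x f g : okR E Z x f g -> okR Hr Z x f g.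
Proof. rewrite /okR; case: ifP => // _; exact: desc_GH. Qed.

Section Sim.
Variables (Z : {set T}) (a : T).
Hypothesis aZ : a \notin Z.

Definition reachH y g := exists q,
  walk Hr a (rcons q (g,y)) /\ internal_ok Hr Z (rcons q (g,y)).
Definition Can x g := x = a \/ exists f, reachH x f /\ okR Hr Z x f g.

Lemma Can_step x g y : Can x g -> step_ok Hr x (g,y) -> reachH y g.
Proof.
case=> [->|[f [[q [wq iq]] ok]]] st.
  by exists [::]; rewrite /= st.
exists (rcons q (f,x)); rewrite walk_rcons internal_ok_rcons wq iq ok.
by rewrite map_rcons last_rcons st.
Qed.

Lemma fwd x y : Can x true -> Hr x y -> reachH y true.
Proof. by move=> c h; apply: Can_step c _. Qed.
Lemma bwd x y : Can x false -> Hr y x -> reachH y false.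
Proof. by move=> c h; apply: Can_step c _. Qed.
Lemma reach_Can x f g : reachH x f -> okR Hr Z x f g -> Can x g.
Proof. by move=> r o; right; exists f. Qed.
Lemma a_Can g : Can a g.
Proof. by left. Qed.

Definition Fin y := y \in Z \/ y = a \/ exists h, reachH y h.
Definition InvP (HS : T -> bool -> Prop) y g :=
  (forall h, okR E Z y g h -> HS y h) /\ Fin y.

Lemma out_inv (HS : T -> bool -> Prop) y g :
  (forall h, Can y h -> HS y h) -> reachH y g -> InvP HS y g.
Proof.
move=> hs r; split; last by right; right; exists g.
by move=> h /okR_GH o; apply: hs; apply: reach_Can r o.
Qed.

Lemma driver (HS : T -> bool -> Prop) b :
  (forall g, HS a g) ->
  (forall x g y, HS x g -> step_ok E x (g,y) -> InvP HS y g) ->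
  b \notin Z -> a != b -> (exists p, active_path E Z a b p) ->
  exists p, active_path Hr Z a b p.
Proof.
move=> HSa tr bZ ab [p [wp lp iop]].
have key : forall p x f, InvP HS x f -> walk E x p ->
    internal_ok E Z ((f,x)::p) -> Fin (last x (map snd p)).
  elim=> [|[g y] r IH] x f [Hi Fx] //= /andP [st wp'] /andP [ok iop'].
  apply: (IH y g) => //; apply: (tr x g y) => //; exact: Hi.
case: p wp lp iop => [|[f x] p] /=; first by move=> _ E'; rewrite E' eqxx in ab.
move=> /andP [st wp'] lp iop.
have := key p x f (tr a f x (HSa f) st) wp' iop; rewrite lp.
case=> [bZ'|[ba|[h [q [wq iq]]]]]; first by rewrite bZ' in bZ.
  by rewrite ba eqxx in ab.
exists (rcons q (h,b)); split => //; by rewrite map_rcons last_rcons.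
Qed.


Section CaseA.
Hypothesis hA : forall c, C c -> [exists z in Z, descendant Hr c z].

Definition HSA x (g : bool) : Prop :=
  if C x then (if g then Can x true /\ Can x false else Can x true \/ Can (pv x) false)
  else Can x g.

Lemma A1 c : C c -> reachH c true -> Can c false.
Proof. by move=> Cc r; apply: reach_Can r _; rewrite /okR /= hA. Qed.

Lemma A0 c f : C c -> reachH c f -> c \notin Z -> Can c true /\ Can c false.
Proof.
move=> Cc r cZ; split; apply: reach_Can r _; rewrite /okR;
  case: f => //=; exact: hA.
Qed.

Lemma A5 y g : C y -> Can (pv y) false -> InvP HSA y g.
Proof.
move=> Cy c; have r : reachH y false by apply: bwd c (Hr_pv Cy).
split; last by right; right; exists false.
move=> [] o; rewrite /HSA Cy; last by right.
apply: A0 r _ => //; move: o; rewrite /okR andbF //.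
Qed.

Lemma A6 y : C y -> (y = a \/ exists f, reachH y f) -> InvP HSA y false.
Proof.
move=> Cy h; split; last by case: h => [->|[f r]]; right; [left|right; exists f].
move=> g o; have yZ : y \notin Z by move: o; rewrite /okR.
have [c1 c2] : Can y true /\ Can y false.
  case: h => [->|[f r]]; [split; exact: a_Can | exact: A0 r yZ].
by rewrite /HSA Cy; case: g {o} => //; left.
Qed.

Lemma A_pvf x : C x -> Can x true \/ Can (pv x) false -> Can (pv x) false.
Proof.
move=> Cx [c|//]; apply: A1 (pvC Cx) _; exact: fwd c (Hr_pv Cx).
Qed.

Lemma Can_cases y g : Can y g -> y = a \/ exists f, reachH y f.
Proof. by case=> [->|[f [r _]]]; [left|right; exists f]. Qed.

Lemma transA x g y : HSA x g -> step_ok E x (g,y) -> InvP HSA y g.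
Proof.
rewrite /HSA /=; have outA z h : reachH z h -> ~~ C z -> InvP HSA z h.
  by move=> r nC; apply: out_inv r => h'; rewrite /HSA (negbTE nC).
case Cx: (C x); case Cy: (C y); case: g => hs st.
- case: hs => c1 c2; case: (eqVneq x (pv y)) => [e|ne].
    by apply: A5 => //; rewrite -e.
  apply: A5 => //; apply: A1 (pvC Cy) _; exact: fwd c1 (Hr_shift Cy st ne).
- have c := A_pvf Cx hs; case: (eqVneq y (pv x)) => [e|ne].
    by apply: A6 => //; rewrite e; exact: Can_cases c.
  by apply: A6 => //; right; exists false; apply: bwd c (Hr_shift Cx st ne).
- case: hs => c1 _; apply: outA (negbT Cy); exact: fwd c1 (Hr_keep st (negbT Cy)).
- have c := A_pvf Cx hs; apply: outA (negbT Cy); apply: bwd c (Hr_shift Cx st _).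
  by apply: contraFneq Cy => /= ->; apply: pvC.
- apply: A5 => //; apply: A1 (pvC Cy) _; apply: fwd hs (Hr_shift Cy st _).
  by apply: contraFneq Cx => /= ->; apply: pvC.
- by apply: A6 => //; right; exists false; apply: bwd hs (Hr_keep st (negbT Cx)).
- by apply: outA (negbT Cy); apply: fwd hs (Hr_keep st (negbT Cy)).
- by apply: outA (negbT Cy); apply: bwd hs (Hr_keep st (negbT Cx)).
Qed.

Lemma HSA_a g : HSA a g.
Proof. rewrite /HSA; case: (C a); case: g; try (split; exact: a_Can); try exact: a_Can; left; exact: a_Can. Qed.
End CaseA.

Section CaseB.
Hypothesis hB : forall c, C c -> ~~ [exists z in Z, descendant Hr c z].

Lemma cZ c : C c -> c \notin Z.
Proof.
move=> Cc; apply: contraNN (hB Cc) => cZ; apply/exists_inP; exists c => //; exact: connect0.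
Qed.

Definition Kt := forall c, C c -> reachH c true.
Definition Kf := forall c, C c -> reachH c false.
Definition HSB x (g : bool) : Prop := if C x then (if g then Kt else Kf) else Can x g.

Lemma B_t c : C c -> reachH c true -> Kt.
Proof.
move=> Cc r d Cd; have [n ->] := cyc Cc Cd; elim: n => //= n IH.
apply: fwd (Hr_pv (iter_pvC n Cc)); apply: reach_Can IH _.
by rewrite /okR /= cZ // iter_pvC.
Qed.

Lemma B_f c : C c -> reachH c false -> Kf.
Proof.
move=> Cc r d Cd; have [n ->] := cycN Cc Cd; elim: n => //= n IH.
apply: bwd (Hr_nx (iter_nxC n Cc)); apply: reach_Can IH _.
by rewrite /okR /= cZ // iter_nxC.
Qed.

Lemma B_ft c : C c -> reachH c false -> Kt.
Proof.
move=> Cc r; apply: B_t (pvC Cc) _; apply: fwd (Hr_pv Cc).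
by apply: reach_Can r _; rewrite /okR /= cZ.
Qed.

Lemma Kt_Can c : Kt -> C c -> Can c true.
Proof. by move=> k Cc; apply: reach_Can (k c Cc) _; rewrite /okR /= cZ. Qed.
Lemma Kf_Can c g : Kf -> C c -> Can c g.
Proof. by move=> k Cc; apply: reach_Can (k c Cc) _; rewrite /okR /= cZ. Qed.

Lemma B_inC_f y g : C y -> reachH y false -> InvP HSB y g.
Proof.
move=> Cy r; split; last by right; right; exists false.
by move=> [] _; rewrite /HSB Cy; [apply: B_ft r| apply: B_f r].
Qed.

Lemma B_inC_t y : C y -> Kt -> InvP HSB y true.
Proof.
move=> Cy k; split; last by right; right; exists true; apply: k.
move=> [] o; rewrite /HSB Cy //.
by move: o; rewrite /okR /= => /desc_GH; rewrite (negbTE (hB Cy)).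
Qed.

Lemma transB x g y : HSB x g -> step_ok E x (g,y) -> InvP HSB y g.
Proof.
rewrite /HSB /=; have outB z h : reachH z h -> ~~ C z -> InvP HSB z h.
  by move=> r nC; apply: out_inv r => h'; rewrite /HSB (negbTE nC).
case Cx: (C x); case Cy: (C y); case: g => hs st.
- exact: B_inC_t.
- exact: B_inC_f (hs y Cy).
- apply: outB (negbT Cy); exact: fwd (Kt_Can hs Cx) (Hr_keep st (negbT Cy)).
- apply: outB (negbT Cy); apply: bwd (Kf_Can false hs (pvC Cx)) (Hr_shift Cx st _).
  by apply: contraFneq Cy => /= ->; apply: pvC.
- apply: B_inC_t => //; apply: B_t (pvC Cy) _; apply: fwd hs (Hr_shift Cy st _).
  by apply: contraFneq Cx => /= ->; apply: pvC.
- by apply: B_inC_f => //; apply: bwd hs (Hr_keep st (negbT Cx)).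
- by apply: outB (negbT Cy); apply: fwd hs (Hr_keep st (negbT Cy)).
- by apply: outB (negbT Cy); apply: bwd hs (Hr_keep st (negbT Cx)).
Qed.

Lemma HSB_a g : HSB a g.
Proof.
rewrite /HSB; case Ca: (C a); case: g => //; try exact: a_Can.
  apply: B_t (pvC Ca) _; exact: fwd (a_Can _) (Hr_pv Ca).
apply: B_f (nxC Ca) _; exact: bwd (a_Can _) (Hr_nx Ca).
Qed.
End CaseB.

Lemma sim b : b \notin Z -> a != b -> (exists p, active_path E Z a b p) ->
  exists p, active_path Hr Z a b p.
Proof.
case: (boolP [exists c, C c && [exists z in Z, descendant Hr c z]]).
  case/existsP => c /andP [Cc dc].
  have hA : forall d, C d -> [exists z in Z, descendant Hr d z].
    move=> d Cd; case/exists_inP: dc => z Zz cz; apply/exists_inP; exists z => //.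
    exact: connect_trans (Hconn Cd Cc) cz.
  exact: driver HSA_a (transA hA).
move=> nex; have hB : forall c, C c -> ~~ [exists z in Z, descendant Hr c z].
  by move=> c Cc; apply: contraNN nex => d; apply/existsP; exists c; rewrite Cc.
exact: driver (HSB_a hB) (transB hB).
Qed.

End Sim.
End Main.


Lemma active_ex_mono (T : finType) (R1 R2 : rel T) Z a b :
  (forall x y, R1 x y -> R2 x y) ->
  (exists p, active_path R1 Z a b p) -> exists p, active_path R2 Z a b p.
Proof. by move=> s [p h]; exists p; apply: active_mono h. Qed.

Lemma Hr2_sub (T : finType) (E : rel T) (C : pred T) (nx pv : T -> T) :
  (forall x, C x -> C (pv x)) -> (forall x, C x -> nx (pv x) = x) ->
  (forall x, C x -> E x (nx x)) ->
  forall x y, Hr (Hr E C nx) C pv x y -> E x y.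
Proof.
move=> pvC pvK Ecyc x y; rewrite /Hr; case Cy: (C y) => /=.
  move=> /or3P [/eqP -> | /andP [_ //] | /andP [h ne]].
    by have := Ecyc _ (pvC _ Cy); rewrite pvK.
  rewrite pvC // pvK // in h.
  case/or3P: h => [/andP [_ /eqP e] | /andP [_ /negP //] | /and3P [_ ? _] //].
  by rewrite e eqxx in ne.
by rewrite !andbT !orbF.
Qed.




Section Fin.
Variables (T : finType) (E : rel T) (k : nat) (v : 'I_k -> T).
Hypothesis vinj : injective v.
Hypothesis Ev : forall i : 'I_k, E (v i) (v (ordS i)).

Definition Cv : pred T := fun x => x \in [seq v i | i : 'I_k].
Definition nxv (x : T) : T := if [pick i | v i == x] is Some i then v (ordS i) else x.
Definition pvv (x : T) : T := if [pick i | v i == x] is Some i then v (ord_pred i) else x.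

Lemma Cv_v i : Cv (v i).
Proof. exact: image_f. Qed.

Lemma Cv_P x : Cv x -> exists i, x = v i.
Proof. by case/imageP => i _ ->; exists i. Qed.

Lemma nxv_v i : nxv (v i) = v (ordS i).
Proof. rewrite /nxv; case: pickP => [j /eqP /vinj -> //|/(_ i)]; by rewrite eqxx. Qed.
Lemma pvv_v i : pvv (v i) = v (ord_pred i).
Proof. rewrite /pvv; case: pickP => [j /eqP /vinj -> //|/(_ i)]; by rewrite eqxx. Qed.

Lemma nxvC x : Cv x -> Cv (nxv x).
Proof. by case/Cv_P => i ->; rewrite nxv_v Cv_v. Qed.
Lemma pvvC x : Cv x -> Cv (pvv x).
Proof. by case/Cv_P => i ->; rewrite pvv_v Cv_v. Qed.
Lemma pvvK x : Cv x -> nxv (pvv x) = x.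
Proof. by case/Cv_P => i ->; rewrite pvv_v nxv_v ord_predK. Qed.
Lemma nxvK x : Cv x -> pvv (nxv x) = x.
Proof. by case/Cv_P => i ->; rewrite nxv_v pvv_v ordSK. Qed.
Lemma Evc x : Cv x -> E x (nxv x).
Proof. by case/Cv_P => i ->; rewrite nxv_v. Qed.

Lemma iter_ordS n (i : 'I_k) : val (iter n (@ordS k) i) = (i + n) %% k.
Proof.
elim: n => [|n IH] /=; first by rewrite addn0 modn_small.
by rewrite IH -addn1 modnDml addn1 addnS.
Qed.

Lemma iter_pv_ordS n (i : 'I_k) : iter n (@ord_pred k) (iter n (@ordS k) i) = i.
Proof. elim: n => // n IH; by rewrite [iter n.+1 (@ord_pred k) _]iterSr iterS ordSK. Qed.

Lemma iter_pvv n i : iter n pvv (v i) = v (iter n (@ord_pred k) i).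
Proof. by elim: n => //= n ->; rewrite pvv_v. Qed.

Lemma cycv x y : Cv x -> Cv y -> exists n, y = iter n pvv x.
Proof.
case/Cv_P => i ->; case/Cv_P => j ->.
have [n en] : exists n, iter n (@ordS k) j = i.
  exists (k - j + i); apply: val_inj; rewrite iter_ordS.
  by rewrite addnA subnKC ?(ltnW (ltn_ord j)) // modnDl modn_small.
by exists n; rewrite iter_pvv -en iter_pv_ordS.
Qed.
Lemma Hr_rev x y : Hr E Cv nxv x y = reverse E v x y.
Proof.
rewrite /Hr /reverse; case: (boolP (Cv y)) => [/Cv_P [i ->] | nC].
  rewrite /= nxv_v.
  have -> : [exists i0, (x == v (ordS i0)) && (v i == v i0)] = (x == v (ordS i)).
    apply/existsP/idP => [[j /andP [e /eqP /vinj ->]] //| e]; by exists i; rewrite e eqxx.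
  have -> : v i \notin [seq v i | i : 'I_k] = false by apply: negbF; exact: Cv_v.
  rewrite andbF /=; congr (_ || _).
  apply/idP/existsP => [/andP [e ne] | [j /and3P [e ne /eqP ej]]].
    by exists (ordS i); rewrite ordSK e ne eqxx.
  by move: (vinj ej) e ne => ->; rewrite ord_predK => -> ->.
have nC' : y \notin [seq v i | i : 'I_k] by [].
rewrite nC' /=.
have -> : [exists i, (x == v (ordS i)) && (y == v i)] = false.
  apply/existsP => [[i /andP [_ /eqP e]]]; by move: nC; rewrite e Cv_v.
have -> : [exists i, [&& E x (v i), x != v (ord_pred i) & y == v (ord_pred i)]] = false.
  apply/existsP => [[i /and3P [_ _ /eqP e]]]; by move: nC; rewrite e Cv_v.
by rewrite orbF.
Qed.
End Fin.


Theorem mainTheorem11 (T : finType) (E : rel T) (k : nat) (v : 'I_k -> T) :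
  dcg E -> 1 < k -> injective v -> (forall i : 'I_k, E (v i) (v (ordS i))) ->
  markov_equiv E (reverse E v).
Proof.
move=> _ _ vinj Ev a b Z ab aZ bZ.
have cyN := cycN (pvvC vinj) (pvvK vinj) (cycv vinj).
have S1 := sim (nxvC vinj) (pvvC vinj) (pvvK vinj) (cycv vinj) (E:=E) (Z:=Z) (a:=a) (b:=b) bZ ab.
have S2 := sim (pvvC vinj) (nxvC vinj) (nxvK vinj) cyN (E := Hr E (Cv v) (nxv v))
  (Z:=Z) (a:=a) (b:=b) bZ ab.
have sub1 x y : Hr E (Cv v) (nxv v) x y -> reverse E v x y by rewrite Hr_rev.
have sub2 x y : reverse E v x y -> Hr E (Cv v) (nxv v) x y by rewrite Hr_rev.
have sub3 := Hr2_sub (pvvC vinj) (pvvK vinj) (Evc vinj Ev).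
rewrite /dsep; split => nd ex; apply: nd.
  exact: active_ex_mono sub3 (S2 (active_ex_mono sub2 ex)).
exact: active_ex_mono sub1 (S1 ex).
Qed.
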